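(* Let $D$ be a Dyck path of length $2n$ and let $D_1\sqsubset D_2\sqsubset\cdots\sqsubset D_n=D$ be an $n$-chain of Dyck shapes ending at $D$; set $D_0$ to be the empty path. Fill $S(D)$ by putting one dot in the leftmost cell (the cell with smallest first coordinate) of each ribbon $S(D_i)\setminus S(D_{i-1})$, $1\le i\le n$. Then the result is a Laguerre history of shape $D$, and this construction is a bijection between $n$-chains of Dyck shapes ending at $D$ and Laguerre histories of shape $D$.
   Context: A Dyck path of length $2m$ is a lattice path from $(0,0)$ to $(2m,0)$ with steps $\nearrow=(1,1)$, $\searrow=(1,-1)$ never going below the $x$-axis; $P(x)$ denotes its height at abscissa $x$. A cell is a point $(a,b)\in\mathbb{Z}^2$ with $b\ge0$, $a+b$ even (the tilted square with vertices $(a,b),(a+1,b\pm1),(a+2,b)$). The Dyck shape of $P$ (length $2m$) is $S(P)=\{(a,b): b\ge0,\ a+b\text{ even},\ 0\le a\le 2m-2,\ b+1\le P(a+1)\}$. Cells are adjacent if they differ by $(\pm1,\pm1)$. A ribbon is a nonempty set of cells, connected for adjacency, containing no four cells $(a,b),(a+1,b+1),(a+1,b-1),(a+2,b)$. For Dyck paths $D$ of length $2m$ and $E$ of length $2m+2$, $D\sqsubset E$ means $S(D)\subseteq S(E)$ and $S(E)\setminus S(D)$ is a ribbon. An $n$-chain of Dyck shapes is a sequence $D_1\sqsubset\cdots\sqsubset D_n$ of Dyck paths with $D_i$ of length $2i$; it ends at $D_n$. The column $a$ of $S(D)$ is the set of its cells with first coordinate $a$; it is below a step $\nearrow$ if the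 $(a+1)$-st step of $D$ is $\nearrow$. A Laguerre history of shape $D$ (length $2n$) is a filling of $S(D)$ with $n$ dots (at most one per cell) such that each column below a step $\nearrow$ contains exactly one dot and the other columns contain none. *)

(* Defs.v *)
From HB Require Import structures.
From mathcomp Require Import all_boot all_order all_algebra.
From mathcomp Require Import finmap.
Set Implicit Arguments. Unset Strict Implicit. Unset Printing Implicit Defensive.
Import Order.TTheory GRing.Theory Num.Theory.
Local Open Scope fset_scope.

(* A lattice path is a sequence of steps: true = up (1,1), false = down (1,-1). *)
Definition path_t := seq bool.

Definition height (P : path_t) (x : nat) : int :=
  \sum_(i < x) (if nth false P i then 1 else -1 : int)%R.

Definition dyck (m : nat) (P : path_t) : Prop :=
  size P = (2 * m)%N /\ (forall x, (x <= 2 * m)%N -> (0 <= height P x)%R)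
  /\ height P (2 * m) = 0%R.

(* Cells are points (a,b) with a,b >= 0 (all cells of Dyck shapes have a >= 0). *)
Definition cell := (nat * nat)%type.

Definition inShape (P : path_t) (c : cell) : bool :=
  [&& ~~ odd (c.1 + c.2), (c.1 + 2 <= size P)%N & ((c.2 + 1)%:Z <= height P (c.1 + 1))%R].

(* S(P) as a finite set: all its cells satisfy a < size P and b < size P. *)
Definition shape (P : path_t) : {fset cell} :=
  [fset c in [seq (a, b) | a <- iota 0 (size P), b <- iota 0 (size P)] | inShape P c].

Definition adjacent : rel cell := fun c d =>
  ((c.1 == d.1 + 1) || (d.1 == c.1 + 1))%N && ((c.2 == d.2 + 1) || (d.2 == c.2 + 1))%N.

(* A ribbon: nonempty, connected for adjacency, containing no four cells
   (a,b),(a+1,b+1),(a+1,b-1),(a+2,b) (here written with b := b'+1 >= 1). *)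
Definition ribbon (R : {fset cell}) : Prop :=
  [/\ R != fset0,
      (forall c d, c \in R -> d \in R ->
         exists p : seq cell, [/\ path adjacent c p, last c p = d & all (fun x => x \in R) p])
    & (forall a b, ~~ [&& (a, b.+1) \in R, (a.+1, b.+2) \in R, (a.+1, b) \in R
                        & (a.+2, b.+1) \in R])].

Definition sqsub (D E : path_t) : Prop :=
  shape D `<=` shape E /\ ribbon (shape E `\` shape D).

(* ch = [:: D_1; ...; D_n] is an n-chain of Dyck shapes ending at D. *)
Definition is_chain (n : nat) (D : path_t) (ch : seq path_t) : Prop :=
  [/\ size ch = n,
      (forall i, (i < n)%N -> dyck i.+1 (nth [::] ch i)),
      (forall i, (i.+1 < n)%N -> sqsub (nth [::] ch i) (nth [::] ch i.+1))
    & last [::] ch = D].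

(* D_i with D_0 the empty path. *)
Definition chainD (ch : seq path_t) (i : nat) : path_t := nth [::] ([::] :: ch) i.

Definition chainRibbon (ch : seq path_t) (i : nat) : {fset cell} :=
  shape (chainD ch i) `\` shape (chainD ch i.-1).

Definition leftmost (R : {fset cell}) : {fset cell} :=
  [fset c in R | all (fun d : cell => (c.1 <= d.1)%N) R].

Definition chain_filling (n : nat) (ch : seq path_t) : {fset cell} :=
  \bigcup_(i <- iota 1 n) leftmost (chainRibbon ch i).

(* A Laguerre history of shape D: a set of dotted cells of S(D) (at most one dot per
   cell) such that the column a contains exactly one dot if the (a+1)-st step of D
   is an up step, and none otherwise. *)
Definition laguerre (D : path_t) (F : {fset cell}) : Prop :=
  F `<=` shape D /\
  forall a : nat, #|` [fset c in F | c.1 == a] | = (if nth false D a then 1 else 0)%N.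

(* Main.v *)
From Pilot Require Import Defs.
From HB Require Import structures.
From mathcomp Require Import all_boot all_order all_algebra.
From mathcomp Require Import finmap.
From mathcomp Require Import zify.
Import Pilot.Defs.
Set Implicit Arguments. Unset Strict Implicit. Unset Printing Implicit Defensive.
Import Order.TTheory GRing.Theory Num.Theory.
Local Open Scope fset_scope.

Lemma height0 (P : path_t) : height P 0 = 0%R.
Proof. by rewrite /height big_ord0. Qed.

Lemma heightS P x : height P x.+1 =
  (height P x + (if nth false P x then 1 else -1))%R.
Proof. by rewrite /height big_ord_recr. Qed.

Lemma height_repr (P : path_t) x : exists k : nat, height P x = ((Posz x) - 2 * (Posz k))%R /\ (k <= x)%N.
Proof.
elim: x => [|x [k [Hk Hkx]]]; first by exists 0%N; rewrite height0.
rewrite heightS Hk; case: (nth false P x).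
- exists k; split; lia.
- exists k.+1; split; lia.
Qed.

Lemma height_step (P : path_t) x : (height P x.+1 = height P x + 1 /\ nth false P x = true \/
  height P x.+1 = height P x - 1 /\ nth false P x = false)%R.
Proof. rewrite heightS; case: (nth false P x); [left|right]; split => //. Qed.

Lemma height_beyond (P : path_t) x : (size P <= x)%N -> height P x.+1 = (height P x - 1)%R.
Proof. by move=> H; rewrite heightS nth_default. Qed.

Lemma mem_shape (P : path_t) (c : cell) : (c \in shape P) = inShape P c.
Proof.
rewrite /shape !inE.
case H: (inShape P c); rewrite ?andbF ?andbT //.
case: c H => a b /= /and3P [Hp Ha Hb].
have [k [Hk _]] := height_repr P (a + 1).
apply/allpairsP; exists (a, b) => /=; split => //; rewrite mem_iota. all: simpl in *; lia.
Qed.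

Definition hn (P : path_t) x := absz (height P x).

Lemma height_par (P : path_t) x : exists k : int, height P x = ((Posz x) - 2 * k)%R.
Proof. have [k [Hk _]] := height_repr P x; exists (Posz k); exact: Hk. Qed.

Lemma height_bnd (P : path_t) x : (- (Posz x) <= height P x <= (Posz x))%R.
Proof. have [k [Hk Hkx]] := height_repr P x; rewrite Hk; lia. Qed.

Section DyckFacts.
Variables (m : nat) (P : path_t).
Hypothesis hP : dyck m P.

Lemma dyck_size : size P = (2 * m)%N.
Proof. by case: hP. Qed.
Lemma dyck_ge0 x : (x <= 2 * m)%N -> (0 <= height P x)%R.
Proof. by case: hP => _ [H _]; apply: H. Qed.
Lemma dyck_end : height P (2 * m) = 0%R.
Proof. by case: hP => _ []. Qed.
Lemma dyck_end1 : height P (2 * m).+1 = (-1)%R.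
Proof. by rewrite height_beyond ?dyck_size ?dyck_end. Qed.
Lemma dyck_nth_beyond x : (2 * m <= x)%N -> nth false P x = false.
Proof. by move=> H; rewrite nth_default ?dyck_size. Qed.
Lemma hnE x : (x <= 2 * m)%N -> Posz (hn P x) = height P x.
Proof. by move=> H; rewrite /hn gez0_abs ?dyck_ge0. Qed.
End DyckFacts.

Lemma dyck_last m (E : path_t) : dyck m.+1 E ->
  height E (2 * m).+1 = 1%R /\ nth false E (2 * m).+1 = false.
Proof.
move=> hE; have h0 := dyck_end hE; have hge := dyck_ge0 hE (x := (2 * m).+1).
have e : (2 * m.+1 = (2 * m).+2)%N by lia.
rewrite e in h0; have := height_step E (2 * m).+1; rewrite h0.
have : ((2 * m).+1 <= 2 * m.+1)%N by lia.
move=> /hge H; case => [[H1 H2]|[H1 H2]]; [lia|split => //; lia].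
Qed.

Definition Rrel (m : nat) (P E : path_t) (l : nat) : Prop :=
  [/\ (l <= 2 * m)%N, (forall x, (x <= l)%N -> height E x = height P x)
    & (forall x, (l < x <= (2 * m).+1)%N -> height E x = (height P x + 2)%R)].

Lemma diffP m (P E : path_t) l (c : cell) : dyck m P -> dyck m.+1 E -> Rrel m P E l ->
  (c \in shape E `\` shape P) =
  ((l <= c.1 <= 2 * m)%N && (Posz (c.2 + 1) == height E (c.1 + 1))%R).
Proof.
move=> hP hE [Hl H1 H2]; case: c => a b /=.
rewrite in_fsetD !mem_shape /inShape /= (dyck_size hP) (dyck_size hE).
have [kE HkE] := height_par E (a + 1).
have [kP HkP] := height_par P (a + 1).
have e0 := dyck_end hP; have e1 := dyck_end1 hP; have [f1 _] := dyck_last hE.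
have r1 : (a + 1 <= l)%N -> height E (a + 1) = height P (a + 1) by apply: H1.
have r2 : (l < a + 1 <= (2 * m).+1)%N -> height E (a + 1) = (height P (a + 1) + 2)%R by apply: H2.
have g0 : (a + 1 <= 2 * m)%N -> (0 <= height P (a + 1))%R by apply: dyck_ge0.
have e0' : (a + 1 = 2 * m)%N -> height P (a + 1) = 0%R by move=> ->.
have e1' : (a + 1 = (2 * m).+1)%N -> height P (a + 1) = (-1)%R by move=> ->.
lia.
Qed.

Section RrelFacts.
Variables (m : nat) (P E : path_t) (l : nat).
Hypotheses (hP : dyck m P) (hE : dyck m.+1 E) (hR : Rrel m P E l).

Lemma Rrel_hE x : (x <= (2 * m).+1)%N ->
  height E x = (height P x + (if (x <= l)%N then 0 else 2))%R.
Proof.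
case: hR => Hl H1 H2 Hx; case: leqP => H; first by rewrite H1 // addr0.
by rewrite H2 // H Hx.
Qed.

Lemma Rrel_nth : [/\ nth false E l = true, nth false P l = false,
  (forall x, x != l -> nth false E x = nth false P x)
  & height E l.+1 = (height P l + 1)%R].
Proof.
case: hR => Hl _ _.
have a0 := Rrel_hE (x := l) ltac:(lia); have a1 := Rrel_hE (x := l.+1) ltac:(lia).
rewrite leqnn /= in a0; rewrite ltnn /= in a1.
have sE := height_step E l; have sP := height_step P l.
have [lE1 lE2] := dyck_last hE.
split; [lia|lia| |lia].
move=> x Hx.
case: (ltnP (2 * m).+1 x) => Hx1.
  by rewrite !nth_default // ?(dyck_size hP) ?(dyck_size hE); lia.
have sE' := height_step E x; have sP' := height_step P x.
case: (ltnP x (2 * m).+1) => Hx2; last first.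
  have -> : x = (2 * m).+1 by lia.
  by rewrite lE2 (dyck_nth_beyond hP).
have b0 := Rrel_hE (x := x) ltac:(lia); have b1 := Rrel_hE (x := x.+1) ltac:(lia).
have : (x < l \/ l < x)%N by lia.
case => h.
- have h1 : (x <= l)%N by lia. have h2 : (x.+1 <= l)%N by lia.
  rewrite h1 /= in b0; rewrite h2 /= in b1. lia.
- have h1 : (x <= l)%N = false by lia. have h2 : (x.+1 <= l)%N = false by lia.
  rewrite h1 /= in b0; rewrite h2 /= in b1. lia.
Qed.

Lemma Rrel_sub : shape P `<=` shape E.
Proof.
apply/fsubsetP => [[a b]]; rewrite !mem_shape /inShape /= (dyck_size hP) (dyck_size hE).
move=> H.
have := Rrel_hE (x := a + 1) ltac:(lia).
case: leqP => _ b0; lia.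
Qed.

Definition cellAt a : cell := (a, (hn E a.+1).-1).

Lemma hE_pos a : (l <= a <= 2 * m)%N -> (1 <= height E a.+1)%R.
Proof.
move=> Ha; have b0 := Rrel_hE (x := a.+1) ltac:(lia).
have h1 : (a.+1 <= l)%N = false by lia. rewrite h1 in b0.
have := dyck_end1 hP.
have g : (a.+1 <= 2 * m)%N -> (0 <= height P a.+1)%R by apply: dyck_ge0.
have e : a.+1 = (2 * m).+1 -> height P a.+1 = height P (2 * m).+1 by move=> ->.
lia.
Qed.

Lemma hnE' a : (a <= (2 * m).+2)%N -> Posz (hn E a) = height E a.
Proof. move=> H; rewrite (hnE hE) //; lia. Qed.

Lemma cellAt_in a : (l <= a <= 2 * m)%N -> cellAt a \in shape E `\` shape P.
Proof.
move=> Ha; rewrite (diffP _ hP hE hR) /cellAt /=.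
have := hE_pos Ha; have := hnE' (a := a.+1) ltac:(lia).
rewrite !addn1; lia.
Qed.

Lemma diff_cellAt c : c \in shape E `\` shape P -> c = cellAt c.1 /\ (l <= c.1 <= 2 * m)%N.
Proof.
case: c => a b; rewrite (diffP _ hP hE hR) /cellAt /= => H.
have := hnE' (a := a.+1) ltac:(lia).
rewrite !addn1 in H; split; [congr pair|]; lia.
Qed.

Lemma adj_cellAt a : (l <= a)%N -> (a.+1 <= 2 * m)%N ->
  adjacent (cellAt a) (cellAt a.+1) /\ adjacent (cellAt a.+1) (cellAt a).
Proof.
move=> H1 H2.
have p1 := hE_pos (a := a) ltac:(lia); have p2 := hE_pos (a := a.+1) ltac:(lia).
have n1 := hnE' (a := a.+1) ltac:(lia); have n2 := hnE' (a := a.+2) ltac:(lia).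
have s := height_step E a.+1.
rewrite /adjacent /cellAt /=; lia.
Qed.

Lemma walk k a : (l <= a)%N -> (a + k <= 2 * m)%N ->
  (exists p, [/\ path adjacent (cellAt a) p, last (cellAt a) p = cellAt (a + k)
     & all (fun x => x \in shape E `\` shape P) p]) /\
  (exists p, [/\ path adjacent (cellAt (a + k)) p, last (cellAt (a + k)) p = cellAt a
     & all (fun x => x \in shape E `\` shape P) p]).
Proof.
elim: k a => [|k IH] a H1 H2.
  by rewrite addn0; split; exists [::].
have [[p [Pp Lp Ap]] [q [Pq Lq Aq]]] := IH a.+1 ltac:(lia) ltac:(lia).
have [ad1 ad2] := adj_cellAt H1 ltac:(lia).
have e : (a.+1 + k = a + k.+1)%N by lia.
rewrite e in Lp Pq Lq.
split.
- exists (cellAt a.+1 :: p); split => //=.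
  + by rewrite ad1.
  + rewrite Ap andbT; apply: cellAt_in; lia.
- exists (rcons q (cellAt a)); split.
  + by rewrite rcons_path Pq Lq ad2.
  + by rewrite last_rcons.
  + by rewrite all_rcons Aq andbT; apply: cellAt_in; lia.
Qed.

Lemma Rrel_sqsub : sqsub P E.
Proof.
split; first exact: Rrel_sub.
case: hR => Hl _ _.
split.
- apply/eqP => H; have := cellAt_in (a := l) ltac:(lia); by rewrite H inE.
- move=> c d Hc Hd.
  have [ec hc] := diff_cellAt Hc; have [ed hd] := diff_cellAt Hd.
  rewrite ec ed.
  case: (leqP c.1 d.1) => h.
  + have [[p [Pp Lp Ap]] _] := walk (k := d.1 - c.1) (a := c.1) ltac:(lia) ltac:(lia).
    exists p; split => //; rewrite Lp; congr cellAt; lia.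
  + have [_ [p [Pp Lp Ap]]] := walk (k := c.1 - d.1) (a := d.1) ltac:(lia) ltac:(lia).
    have e : (d.1 + (c.1 - d.1) = c.1)%N by lia.
    rewrite e in Pp Lp; exists p; split => //.
- move=> a b; apply/negP => /and4P [_ h2 h3 _].
  rewrite (diffP _ hP hE hR) /= in h2; rewrite (diffP _ hP hE hR) /= in h3.
  lia.
Qed.

Lemma Rrel_leftmost : leftmost (shape E `\` shape P) = [fset (l, hn P l)].
Proof.
have [_ _ _ hl] := Rrel_nth.
case: hR => Hl _ _.
have nP := hnE hP (x := l) Hl.
have nE := hnE' (a := l.+1) ltac:(lia).
apply/fsetP => c; rewrite /leftmost in_fset in_fset1.
apply/idP/idP.
- move=> /andP [Hc /allP Ha].
  have Hc2 := Ha _ (cellAt_in (a := l) ltac:(lia)); clear Ha.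
  move: Hc Hc2; case: c => a b; rewrite (diffP _ hP hE hR) /= => Hc Hc2.
  have ea : a = l by move: Hc2 => /=; lia.
  subst a; rewrite !addn1 in Hc; apply/eqP; congr pair; lia.
- move=> /eqP ->; apply/andP; split.
  + rewrite (diffP _ hP hE hR) /= !addn1; lia.
  + apply/allP => d Hd /=; have [_ h] := diff_cellAt Hd; by case/andP: h.
Qed.
End RrelFacts.

Lemma cross a (p : seq cell) : forall c : cell, path adjacent c p -> (c.1 <= a)%N ->
  (a <= (last c p).1)%N -> exists2 e, e \in c :: p & e.1 = a.
Proof.
elim: p => [|x p IH] [c1 c2] /=.
  move=> _ H1 H2; exists (c1, c2); first by rewrite inE.
  by rewrite /=; lia.
move=> /andP [Had Hp] H1 H2.
case: (eqVneq c1 a) => [<-|Hne]; first by exists (c1, c2); rewrite // mem_head.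
have : (x.1 <= a)%N by move: Had; rewrite /adjacent /=; lia.
move=> /(IH x Hp) /(_ H2) [e He1 He2]; exists e => //.
by rewrite inE He1 orbT.
Qed.

Section SqsubRrel.
Variables (m : nat) (P E : path_t).
Hypotheses (hP : dyck m P) (hE : dyck m.+1 E) (hS : sqsub P E).

Lemma sq_ge x : (x <= (2 * m).+1)%N -> (height P x <= height E x)%R.
Proof.
move=> Hx; case: hS => Hsub _.
have [e1 _] := dyck_last hE; have e2 := dyck_end1 hP.
case: (ltnP x (2 * m).+1) => Hx2; last first.
  have -> : x = (2 * m).+1 by lia. by rewrite e1 e2.
have gE := dyck_ge0 hE (x := x) ltac:(lia).
case: (lerP (height P x) 0) => Hp; first lia.
have x1 : (0 < x)%N by move: Hp; case: (x) => //; rewrite height0.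
have e0 := dyck_end hP.
have nP := hnE hP (x := x) ltac:(lia).
have [k Hk] := height_par P x.
have xx : (x.-1 + 1 = x)%N by lia.
have : ((x.-1, (hn P x).-1) \in shape P).
  rewrite mem_shape /inShape /= xx (dyck_size hP).
  have : x != (2 * m)%N by apply/eqP => ex; move: Hp; rewrite ex e0.
  lia.
move=> /(fsubsetP Hsub); rewrite mem_shape /inShape /= xx; lia.
Qed.

Lemma sq_le x : (x <= (2 * m).+1)%N -> (height E x <= height P x + 2)%R.
Proof.
move=> Hx; case: hS => Hsub [_ _ Hno].
have [e1 _] := dyck_last hE; have e2 := dyck_end1 hP.
case: (ltnP x (2 * m).+1) => Hx2; last first.
  have -> : x = (2 * m).+1 by lia. by rewrite e1 e2.
have [kE HkE] := height_par E x; have [kP HkP] := height_par P x.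
have g := sq_ge Hx.
rewrite real_leNgt ?num_real //; apply/negP => Hlt.
have H4 : (height P x + 4 <= height E x)%R by lia.
have bE := height_bnd E x.
have gP := dyck_ge0 hP (x := x) ltac:(lia).
have nP := hnE hP (x := x) ltac:(lia).
have sE := height_step E x.
have : (x <> 2 * m)%N.
  move=> ex; rewrite ex in sE H4; rewrite ex in gP; lia.
move=> xn.
case: x Hx Hx2 HkE HkP g Hlt H4 bE gP nP sE xn => [|[|y]] Hx Hx2 HkE HkP g Hlt H4 bE gP nP sE xn; try lia.
have sE1 := height_step E y.+1; have sP1 := height_step P y.+1; have sP2 := height_step P y.+2.
apply: (negP (Hno y (hn P y.+2).+1)).
rewrite !in_fsetD !mem_shape /inShape /= (dyck_size hP) (dyck_size hE) !addn1.
lia.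
Qed.

Lemma sqsub_Rrel : exists l, Rrel m P E l.
Proof.
have Hex : exists a, (a <= 2 * m)%N && (height E (a + 1) == height P (a + 1) + 2)%R.
  exists (2 * m)%N; have [e1 _] := dyck_last hE; have e2 := dyck_end1 hP.
  rewrite leqnn addn1 e1 e2; lia.
case: (ex_minnP Hex) => l /andP [Hl Hl2] Hmin.
have gg x : (x <= (2 * m).+1)%N -> (height E x = height P x \/ height E x = height P x + 2)%R.
  move=> Hx; have := sq_ge Hx; have := sq_le Hx.
  have [kE HkE] := height_par E x; have [kP HkP] := height_par P x; lia.
exists l; split => //.
- case => [|y] Hy; first by rewrite !height0.
  have h1 := Hmin y; have h2 := gg y.+1 ltac:(lia); rewrite addn1 in h1; lia.
- case => [|y] /andP [Hy1 Hy2] //.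
  case: (gg y.+1 Hy2) => H; last exact: H.
  exfalso.
  have [e1 _] := dyck_last hE; have e2 := dyck_end1 hP; have e0 := dyck_end hP.
  have yl : (l < y)%N.
    case: (eqVneq y l) => [ey|ne]; last lia.
    by subst y; rewrite addn1 in Hl2; lia.
  have y2 : (y < 2 * m)%N.
    case: (eqVneq y (2 * m)%N) => [ey|ne]; last lia.
    by subst y; lia.
  case: hS => Hsub [Hne Hcon Hno].
  have Hc0 : (l, (hn E l.+1).-1) \in shape E `\` shape P.
    rewrite in_fsetD !mem_shape /inShape /= (dyck_size hP) (dyck_size hE) !addn1.
    rewrite addn1 in Hl2.
    have [kE HkE] := height_par E l.+1.
    have nE := hnE hE (x := l.+1) ltac:(lia).
    have g1 : (l.+1 <= 2 * m)%N -> (0 <= height P l.+1)%R by apply: dyck_ge0.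
    have g2 : l.+1 = (2 * m).+1 -> height P l.+1 = (-1)%R by move=> ->.
    lia.
  have Hd0 : ((2 * m)%N, 0%N) \in shape E `\` shape P.
    rewrite in_fsetD !mem_shape /inShape /= (dyck_size hP) (dyck_size hE) !addn1 e1.
    lia.
  have [p [Pp Lp Ap]] := Hcon _ _ Hc0 Hd0.
  have [e He1 He2] := cross (a := y) Pp ltac:(rewrite /=; lia) ltac:(rewrite Lp /=; lia).
  have He : e \in shape E `\` shape P.
    move: He1; rewrite inE => /orP [/eqP ee|]; first by move: He2; rewrite ee /=; lia.
    by move/(allP Ap).
  move: He; case: e He2 {He1} => a b /= ea; subst a.
  rewrite in_fsetD !mem_shape /inShape /= (dyck_size hP) (dyck_size hE) !addn1.
  have h0 : y.+1 = (2 * m)%N -> height P y.+1 = 0%R by move=> ->.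
  lia.
Qed.
End SqsubRrel.

Lemma dyck0 : dyck 0 [::].
Proof.
split; first by rewrite muln0.
split; last by rewrite muln0 height0.
move=> x Hx; have -> : x = 0%N by lia.
by rewrite height0.
Qed.

Lemma Rrel0 D : dyck 1 D -> Rrel 0 [::] D 0.
Proof.
move=> hD; have [e1 _] := dyck_last hD; have e2 := dyck_end1 dyck0.
split => // x Hx.
- have -> : x = 0%N by lia.
  by rewrite !height0.
- have -> : x = 1%N by lia. rewrite muln0 in e1 e2. by rewrite e1 e2.
Qed.

Lemma filling_rcons n (ch : seq path_t) D : size ch = n ->
  chain_filling n.+1 (rcons ch D) =
  chain_filling n ch `|` leftmost (shape D `\` shape (last [::] ch)).
Proof.
move=> Hs; rewrite /chain_filling.
have -> : iota 1 n.+1 = iota 1 n ++ [:: n.+1] by rewrite -(addn1 n) iotaD /= add1n addn1.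
rewrite big_cat /= big_seq1.
congr fsetU.
- apply: eq_big_seq => i; rewrite mem_iota => Hi.
  rewrite /chainRibbon /chainD -!rcons_cons !nth_rcons /= Hs.
  have -> : (i < n.+1)%N by lia. by have -> : (i.-1 < n.+1)%N by lia.
- rewrite /chainRibbon /chainD -!rcons_cons !nth_rcons /= Hs.
  rewrite ltnn eqxx ltnSn -Hs.
  by have := nth_last [::] ([::] :: ch); rewrite /= => ->.
Qed.

Lemma nth_lastE (ch : seq path_t) n : size ch = n.+1 -> nth [::] ch n = last [::] ch.
Proof. by move=> Hs; rewrite -nth_last Hs. Qed.

Lemma chain_fwd n D (ch : seq path_t) : is_chain n.+1 D ch -> exists ch' l,
  [/\ ch = rcons ch' D, is_chain n (last [::] ch') ch', dyck n (last [::] ch'), dyck n.+1 D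
    & Rrel n (last [::] ch') D l /\
      chain_filling n.+1 ch = chain_filling n ch' `|` [fset (l, hn (last [::] ch') l)]].
Proof.
case=> Hs Hd Hq Hl.
case/lastP: ch Hs Hd Hq Hl => [//|ch' x] Hs Hd Hq Hl.
rewrite last_rcons in Hl; subst x.
rewrite size_rcons in Hs; case: Hs => Hs.
have nthr i : (i < n)%N -> nth [::] (rcons ch' D) i = nth [::] ch' i.
  by move=> Hi; rewrite nth_rcons Hs Hi.
have Hc : is_chain n (last [::] ch') ch'.
  split => //.
  - move=> i Hi; rewrite -nthr //; apply: Hd; lia.
  - move=> i Hi; rewrite -!nthr; [apply: Hq; lia| lia | lia].
have HD : dyck n.+1 D by have := Hd n (ltnSn n); rewrite nth_rcons Hs ltnn eqxx.
have [HE [l HR]] : dyck n (last [::] ch') /\ exists l, Rrel n (last [::] ch') D l.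
  case: n Hs Hd Hq nthr Hc HD => [|n] Hs Hd Hq nthr Hc HD.
  - by case: ch' Hs {Hd Hq nthr Hc} => // _; split; [exact: dyck0| exists 0%N; exact: Rrel0].
  - have el := nth_lastE Hs.
    have HE : dyck n.+1 (last [::] ch') by rewrite -el -nthr //; apply: Hd.
    split => //; apply: (sqsub_Rrel HE HD).
    have := Hq n (ltnSn _); rewrite nthr // el nth_rcons Hs ltnn eqxx //.
exists ch', l; split => //; split => //.
by rewrite filling_rcons // (Rrel_leftmost HE HD HR).
Qed.

Lemma chain_bwd n E (ch : seq path_t) D l : is_chain n E ch -> dyck n E -> dyck n.+1 D ->
  Rrel n E D l -> is_chain n.+1 D (rcons ch D).
Proof.
case=> Hs Hd Hq Hl hE hD hR; split.
- by rewrite size_rcons Hs.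
- move=> i Hi; rewrite nth_rcons Hs; case: ltnP => h; first exact: Hd.
  have ei : i = n by lia.
  by rewrite ei eqxx.
- move=> i Hi; rewrite !nth_rcons Hs.
  case: (ltnP i.+1 n) => h.
  + have -> : (i < n)%N by lia. exact: Hq.
  + have ei : i.+1 = n by lia.
    have -> : (i < n)%N by lia. rewrite ei eqxx.
    rewrite (nth_lastE (n := i)) ?Hs // Hl.
    exact: (Rrel_sqsub hE hD hR).
- by rewrite last_rcons.
Qed.

Lemma in_fsetC (F : {fset cell}) (p : pred cell) c : (c \in [fset x in F | p x]) = (c \in F) && p c.
Proof. by rewrite in_fset. Qed.

Lemma laguerre_step m (P E : path_t) l F : dyck m P -> dyck m.+1 E -> Rrel m P E l ->
  laguerre P F -> laguerre E (F `|` [fset (l, hn P l)]).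
Proof.
move=> hP hE hR [Hsub Hcnt].
have [nE nP nx hl] := Rrel_nth hP hE hR.
have Hc0 : (l, hn P l) \in shape E `\` shape P.
  case: (hR) => Hl _ _; have := hnE hP Hl.
  rewrite (diffP _ hP hE hR) /= !addn1; lia.
split.
- rewrite fsubUset; apply/andP; split.
  + exact: fsubset_trans Hsub (Rrel_sub hP hE hR).
  + by rewrite fsub1set; move: Hc0; rewrite in_fsetD => /andP [].
- move=> a.
  case: (eqVneq a l) => [->|ne].
  + rewrite nE.
    have F0 : [fset c in F | c.1 == l] = fset0 by apply: cardfs0_eq; rewrite Hcnt nP.
    have -> : [fset c in F `|` [fset (l, hn P l)] | c.1 == l] = [fset (l, hn P l)].
      apply/fsetP => c; rewrite in_fsetC in_fsetU in_fset1.
      case: (eqVneq c (l, hn P l)) => [->|ne']; first by rewrite orbT /= eqxx.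
      rewrite orbF /=; apply/negbTE; apply/negP => /andP [h1 h2].
      have : c \in [fset c in F | c.1 == l] by rewrite in_fsetC h1 h2.
      by rewrite F0 inE.
    by rewrite cardfs1.
  + rewrite nx // -Hcnt; congr (#|` _|); apply/fsetP => c.
    rewrite !in_fsetC in_fsetU in_fset1.
    case: (eqVneq c (l, hn P l)) => [->|_]; last by rewrite orbF.
    by rewrite /= orbT eq_sym (negbTE ne) !andbF.
Qed.

Theorem part1 n D (ch : seq path_t) : is_chain n D ch -> laguerre D (chain_filling n ch).
Proof.
elim: n D ch => [|n IH] D ch.
- case=> Hs _ _ Hl; case: ch Hs Hl => // _ <-.
  rewrite /chain_filling /= big_nil; split; first exact: fsub0set.
  move=> a; rewrite nth_nil.
  apply/eqP; rewrite cardfs_eq0; apply/eqP/fsetP => c; rewrite in_fsetC !inE //.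
- move=> /chain_fwd [ch' [l [-> Hc HE HD [HR ->]]]].
  exact: (laguerre_step HE HD HR (IH _ _ Hc)).
Qed.

Definition Key (E : path_t) (F : {fset cell}) (c : cell) : Prop :=
  [/\ c \in F, c.2 = hn E c.1 & forall d, d \in F -> (c.1 < d.1)%N -> d.2 != hn E d.1].

Lemma key_unique E F c1 c2 : Key E F c1 -> Key E F c2 -> c1 = c2.
Proof.
case: c1 c2 => [a1 b1] [a2 b2] [h1 e1 k1] [h2 e2 k2] /=.
simpl in *.
case: (ltngtP a1 a2) => h.
- by have := k1 _ h2 h; rewrite /= e2 eqxx.
- by have := k2 _ h1 h; rewrite /= e1 eqxx.
- by subst a2; rewrite e1 e2.
Qed.

Lemma col_true (P : path_t) F d : laguerre P F -> d \in F -> nth false P d.1 = true.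
Proof.
case=> _ Hc Hd; case E: (nth false P d.1) => //.
have := Hc d.1; rewrite E => /cardfs0_eq F0.
have : d \in [fset c in F | c.1 == d.1] by rewrite in_fsetC Hd eqxx.
by rewrite F0 inE.
Qed.

Lemma key_step m (P E : path_t) l F : dyck m P -> dyck m.+1 E -> Rrel m P E l ->
  laguerre P F -> Key E (F `|` [fset (l, hn P l)]) (l, hn P l) /\ (l, hn P l) \notin F.
Proof.
move=> hP hE hR hL.
have [nE nP nx hl] := Rrel_nth hP hE hR.
case: (hR) => Hl H1 H2.
split; last by apply/negP => /(col_true hL); rewrite /= nP.
split.
- by rewrite in_fsetU in_fset1 eqxx orbT.
- by rewrite /= /hn H1.
- move=> [a b]; rewrite in_fsetU in_fset1 /= => /orP [Hd|/eqP [-> _]]; last by rewrite ltnn.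
  move=> Hla.
  have nt := col_true hL Hd; rewrite /= in nt.
  case: hL => Hsub _; have := fsubsetP Hsub _ Hd; rewrite mem_shape /inShape /= (dyck_size hP) => Hs.
  have st := height_step P a; rewrite nt in st.
  have ha := H2 a ltac:(lia).
  have na := hnE hE (x := a) ltac:(lia).
  rewrite !addn1 in Hs; lia.
Qed.

Lemma fsetU1K (F : {fset cell}) k : k \notin F -> (F `|` [fset k]) `\ k = F.
Proof.
move=> Hk; apply/fsetP => c; rewrite in_fsetD1 in_fsetU in_fset1.
case: (eqVneq c k) => [->|]; last by rewrite orbF.
by rewrite (negbTE Hk).
Qed.

Lemma Rrel_uniq m (P1 P2 E : path_t) l : dyck m P1 -> dyck m P2 -> dyck m.+1 E ->
  Rrel m P1 E l -> Rrel m P2 E l -> P1 = P2.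
Proof.
move=> h1 h2 hE r1 r2.
have hh x : (x <= 2 * m)%N -> height P1 x = height P2 x.
  move=> Hx; have := Rrel_hE r1 (x := x) ltac:(lia).
  have := Rrel_hE r2 (x := x) ltac:(lia).
  case: leqP => _; lia.
apply: (@eq_from_nth _ false); first by rewrite (dyck_size h1) (dyck_size h2).
move=> x; rewrite (dyck_size h1) => Hx.
have a0 := hh x ltac:(lia); have a1 := hh x.+1 ltac:(lia).
have s1 := height_step P1 x; have s2 := height_step P2 x.
lia.
Qed.

Theorem part2 n D (ch1 ch2 : seq path_t) : is_chain n D ch1 -> is_chain n D ch2 ->
  chain_filling n ch1 = chain_filling n ch2 -> ch1 = ch2.
Proof.
elim: n D ch1 ch2 => [|n IH] D ch1 ch2.
- move=> [s1 _ _ _] [s2 _ _ _] _; case: ch1 s1 => //; case: ch2 s2 => //.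
- move=> /chain_fwd [c1 [l1 [-> Hc1 HE1 HD [HR1 ->]]]].
  move=> /chain_fwd [c2 [l2 [-> Hc2 HE2 _ [HR2 ->]]]] Heq.
  have L1 := part1 Hc1; have L2 := part1 Hc2.
  have [K1 N1] := key_step HE1 HD HR1 L1.
  have [K2 N2] := key_step HE2 HD HR2 L2.
  rewrite Heq in K1.
  have ek := key_unique K1 K2.
  have el : l1 = l2 by case: ek.
  subst l2.
  have eE : last [::] c1 = last [::] c2 := Rrel_uniq HE1 HE2 HD HR1 HR2.
  have eF : chain_filling n c1 = chain_filling n c2.
    by rewrite -(fsetU1K N1) -(fsetU1K N2) Heq ek.
  rewrite eE in Hc1.
  by rewrite (IH _ _ _ Hc1 Hc2 eF).
Qed.

Lemma seq_max (s : seq cell) : s != [::] -> exists2 d, d \in s & forall e, e \in s -> (e.1 <= d.1)%N.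
Proof.
elim: s => // x s IH _; case: (eqVneq s [::]) => [->|ne].
  by exists x; rewrite ?mem_head // => e; rewrite inE => /eqP ->.
have [d Hd Hm] := IH ne.
case: (leqP x.1 d.1) => h.
- exists d; first by rewrite inE Hd orbT.
  by move=> e; rewrite inE => /orP [/eqP ->|/Hm].
- exists x; first exact: mem_head.
  move=> e; rewrite inE => /orP [/eqP ->|/Hm h'] //.
  exact: (leq_trans h' (ltnW h)).
Qed.

Lemma fset_max (S : {fset cell}) : S != fset0 -> exists2 d, d \in S & forall e, e \in S -> (e.1 <= d.1)%N.
Proof.
move=> H; apply: seq_max; apply/eqP => E.
by move: H => /fset0Pn [x]; rewrite -[x \in S]/(x \in enum_fset S) E.
Qed.

Lemma colD1 (F : {fset cell}) (c : cell) a : c \in F ->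
  (#|` [fset x in F `\ c | x.1 == a]| + (c.1 == a))%N = #|` [fset x in F | x.1 == a]|.
Proof.
move=> Hc.
have -> : [fset x in F `\ c | x.1 == a] = [fset x in F | x.1 == a] `\ c.
  by apply/fsetP => x; rewrite in_fsetD1 !in_fsetC in_fsetD1 andbA.
by rewrite [in RHS](cardfsD1 c) in_fsetC Hc /= addnC.
Qed.

Section Surj.
Variables (n : nat) (D : path_t) (F : {fset cell}).
Hypotheses (hD : dyck n.+1 D) (hL : laguerre D F).

Lemma sat_col q : nth false D q = true -> (height D q <= 1)%R ->
  exists2 d, d \in F & d.1 = q /\ d.2 = hn D q.
Proof.
move=> nq hq; case: (hL) => Hsub Hc.
have : [fset x in F | x.1 == q] != fset0 by rewrite -cardfs_gt0 Hc nq.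
move=> /fset0Pn [[d1 d2]]; rewrite in_fsetC => /andP [Hd /eqP /= dq].
exists (d1, d2) => //; split => //=.
have := fsubsetP Hsub _ Hd; rewrite mem_shape /inShape /= dq (dyck_size hD).
have st := height_step D q; rewrite nq in st.
have [k Hk] := height_par D q.
move=> Hs.
have lq : (q <= 2 * n.+1)%N by lia.
have := hnE hD lq; rewrite !addn1 in Hs; lia.
Qed.

Lemma surj_step : exists l E F', [/\ dyck n E, Rrel n E D l, laguerre E F'
  & F = F' `|` [fset (l, hn E l)]].
Proof.
have [e1 e1n] := dyck_last hD.
have e0 := dyck_end hD.
have sD := dyck_size hD.
have e2 : (2 * n.+1 = (2 * n).+2)%N by lia.
rewrite e2 in e0 sD.
set S := [fset d in F | d.2 == hn D d.1].
have S0 : S != fset0.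
  have n0 : nth false D 0 = true.
    have := height_step D 0; have := dyck_ge0 hD (x := 1) ltac:(lia).
    rewrite height0; lia.
  have [d Hd [d1 d2]] := sat_col n0 ltac:(rewrite height0; lia).
  by apply/fset0Pn; exists d; rewrite in_fsetC Hd d1 d2 /=; apply/eqP.
have [[l b] Hc Hmax] := fset_max S0.
move: Hc; rewrite in_fsetC => /andP [HcF /eqP /= Hcs].
have Hmx : forall d, d \in F -> (l < d.1)%N -> d.2 != hn D d.1.
  move=> d Hd Hl; apply/negP => /eqP h.
  have := Hmax d; rewrite in_fsetC Hd h eqxx /= => /(_ isT).
  by rewrite leqNgt Hl.
have nl := col_true hL HcF; rewrite /= in nl.
have ll : (l <= 2 * n)%N.
  case: (leqP l (2 * n)) => // h; exfalso.
  have : nth false D l = false.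
    case: (eqVneq l (2 * n).+1) => [->|ne] //.
    by rewrite nth_default // sD; lia.
  by rewrite nl.
have claim x : (l < x <= 2 * n)%N -> (2 <= height D x)%R.
  move=> Hx; case: (lerP 2 (height D x)) => // hx; exfalso.
  have g0 := dyck_ge0 hD (x := x) ltac:(lia).
  have [q [qx qn qh]] : exists q, [/\ (l < q)%N, nth false D q = true & (height D q <= 1)%R].
    case nx: (nth false D x); first by exists x; split => //; lia.
    have s0 := height_step D x; rewrite nx in s0.
    have g1 := dyck_ge0 hD (x := x.+1) ltac:(lia).
    have g2 := dyck_ge0 hD (x := x.+2) ltac:(lia).
    have s1 := height_step D x.+1.
    exists x.+1; split; lia.
  have [d Hd [d1 d2]] := sat_col qn qh.
  have := Hmx d Hd; rewrite d1 d2 eqxx => /(_ qx); done.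
pose E := take (2 * n) (set_nth false D l false).
have sE : size E = (2 * n)%N.
  by rewrite /E size_take size_set_nth sD; case: ltnP => h; lia.
have nthE x : nth false E x = if (x < 2 * n)%N then (if x == l then false else nth false D x) else false.
  case: ltnP => h; first by rewrite /E nth_take // nth_set_nth.
  by rewrite nth_default // sE.
have hEq x : (x <= 2 * n)%N -> ((x <= l)%N -> height E x = height D x) /\
    ((l < x)%N -> height E x = (height D x - 2)%R).
  elim: x => [|x IH] Hx; first by rewrite !height0.
  have [IH1 IH2] := IH ltac:(lia).
  rewrite !heightS nthE (_ : (x < 2 * n)%N = true); last by lia.
  case: (eqVneq x l) => [ex|ne].
  - subst x; rewrite nl /=; split; lia.
  - case: (nth false D x); split; lia.
have hE2 : height E (2 * n) = 0%R.
  have [a1 a2] := hEq (2 * n)%N (leqnn _).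
  case: (eqVneq l (2 * n)%N) => [el|ne].
  - have st := height_step D l; rewrite nl el in st.
    rewrite a1 ?el //; lia.
  - have c2 := claim (2 * n)%N ltac:(lia).
    have st := height_step D (2 * n).+1; rewrite e1n in st.
    have st2 := height_step D (2 * n).
    rewrite a2; [lia|lia].
have hdE : dyck n E.
  split => //; split => // x Hx.
  have [a1 a2] := hEq x Hx.
  case: (leqP x l) => h; first by rewrite a1 //; apply: (dyck_ge0 hD); lia.
  have := claim x ltac:(lia); rewrite a2 //; lia.
have hR : Rrel n E D l.
  split => // x.
  - move=> Hx; have [a1 _] := hEq x ltac:(lia); by rewrite a1.
  - move=> /andP [Hx1 Hx2].
    case: (leqP x (2 * n)) => h.
    + have [_ a2] := hEq x h; rewrite a2 //; lia.
    + have -> : x = (2 * n).+1 by lia.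
      by rewrite e1 (dyck_end1 hdE).
have hnl : hn E l = b.
  by rewrite Hcs /hn; have [a1 _] := hEq l ll; rewrite a1.
exists l, E, (F `\ (l, b)); split => //; last first.
  by rewrite hnl fsetUC fsetD1K.
case: (hL) => Hsub Hcnt.
have cnt a : #|` [fset x in F `\ (l, b) | x.1 == a]| = nth false E a.
  have H := colD1 a HcF; rewrite Hcnt /= in H; rewrite nthE.
  case: (eqVneq l a) => [ea|ne].
  - subst a; rewrite nl eqxx in H; rewrite ?eqxx; case: ifP => _; simpl in H |- *; lia.
  - simpl in H; rewrite (negbTE ne) addn0 in H; rewrite H.
    case: ltnP => // h.
    case: (eqVneq a (2 * n)%N) => [ea|ne2].
    + subst a.
      have c2 := claim (2 * n)%N ltac:(lia).
      have st := height_step D (2 * n).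
      have g : height D (2 * n).+1 = 1%R := e1.
      case: (nth false D (2 * n)) st => st //; lia.
    + case: (eqVneq a (2 * n).+1) => [->|ne3]; first by rewrite e1n.
      by rewrite nth_default // sD; lia.
split => //.
apply/fsubsetP => [[q bq]]; rewrite in_fsetD1 => /andP [hne Hd].
have ql : q != l.
  apply/eqP => ql; subst q.
  have := cnt l; rewrite nthE eqxx; case: ifP => _ /cardfs0_eq F0.
  + have : (l, bq) \in [fset x in F `\ (l, b) | x.1 == l] by rewrite in_fsetC in_fsetD1 hne Hd eqxx.
    by rewrite F0 inE.
  + have : (l, bq) \in [fset x in F `\ (l, b) | x.1 == l] by rewrite in_fsetC in_fsetD1 hne Hd eqxx.
    by rewrite F0 inE.
have nq := col_true hL Hd; rewrite /= in nq.
have := fsubsetP Hsub _ Hd; rewrite !mem_shape /inShape /= sD sE !addn1 => Hs.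
have st := height_step D q; rewrite nq in st.
have stl := height_step D l; rewrite nl in stl.
have g0 := dyck_ge0 hD (x := q) ltac:(lia).
have st2 := height_step D (2 * n).
have i1 : q.+1 = (2 * n)%N -> height D q.+1 = height D (2 * n) by move=> ->.
have i2 : q.+1 = (2 * n).+1 -> height D q.+1 = height D (2 * n).+1 by move=> ->.
have i3 : l = (2 * n)%N -> height D l = height D (2 * n) by move=> ->.
have i4 : l = (2 * n)%N -> height D l.+1 = height D (2 * n).+1 by move=> ->.
case: (ltnP q l) => h.
- have [a1 _] := hEq q.+1 ltac:(lia).
  have a1' := a1 ltac:(lia).
  lia.
- have ql' : (l < q)%N by lia.
  have qn : (q <= 2 * n)%N.
    case: (leqP q (2 * n)) => // h2; exfalso.
    case: (eqVneq q (2 * n).+1) => [eq|ne3]; first by move: nq; rewrite eq e1n.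
    by move: nq; rewrite nth_default // sD; lia.
  have cq := claim q ltac:(lia).
  have hm := Hmx _ Hd ql'; rewrite /= in hm.
  have nn := hnE hD (x := q) ltac:(lia).
  have [k Hk] := height_par D q.
  have qn2 : (q.+1 <= 2 * n)%N.
    case: (leqP q.+1 (2 * n)) => // h3; exfalso; lia.
  have [_ a2] := hEq q.+1 qn2.
  have a2' := a2 ltac:(lia).
  lia.
Qed.
End Surj.

Theorem part3 n D F : dyck n D -> laguerre D F ->
  exists ch, is_chain n D ch /\ chain_filling n ch = F.
Proof.
elim: n D F => [|n IH] D F hD hL.
- have sD := dyck_size hD; rewrite muln0 in sD.
  case: D sD hD hL => // _ hD [Hsub _].
  exists [::]; split.
  + by split => // i.
  + rewrite /chain_filling /= big_nil; apply/fsetP => c; rewrite inE.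
    apply/esym/negbTE/negP => /(fsubsetP Hsub); rewrite mem_shape /inShape /=; lia.
- have [l [E [F' [hE hR hL' ->]]]] := surj_step hD hL.
  have [ch' [Hc Hf]] := IH E F' hE hL'.
  exists (rcons ch' D); split; first exact: chain_bwd Hc hE hD hR.
  case: (Hc) => Hs _ _ Hl.
  by rewrite filling_rcons // Hl (Rrel_leftmost hE hD hR) Hf.
Qed.

Theorem mainTheorem8 (n : nat) (D : seq bool) (hD : dyck n D) :
  [/\ (forall ch, is_chain n D ch -> laguerre D (chain_filling n ch)),
      (forall ch1 ch2, is_chain n D ch1 -> is_chain n D ch2 ->
         chain_filling n ch1 = chain_filling n ch2 -> ch1 = ch2)
    & (forall F, laguerre D F -> exists ch, is_chain n D ch /\ chain_filling n ch = F)].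
Proof.
split.
- exact: part1.
- exact: part2.
- move=> F; exact: part3.
Qed.
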